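(* Let $\mathbb{K}$ be an algebraically closed field with $\operatorname{char}(\mathbb{K})\neq 2$, and let $q\in\mathbb{K}^{\times}\setminus\{-1\}$, where $\mathbb{K}^{\times}=\mathbb{K}\setminus\{0\}$. Let \[ A=\frac{\mathbb{K}\langle x_1,x_2,x_3,x_4\rangle}{\langle g_1,\ldots,g_6\rangle}, \] where \[ g_1=x_1x_2-x_2x_1,\quad g_2=x_2x_3-x_3x_2,\quad g_3=x_1x_3-x_3x_1,\quad g_4=x_1x_4-x_4x_1, \] \[ g_5=x_2x_4-x_4x_2-q(x_1^2-x_2x_4),\quad g_6=x_4x_3-x_3x_4. \] Then the point scheme of $A$ is $Q\cup L\subset\mathbb{P}^3$, where $Q=\mathcal{V}(x_1^2-x_2x_4)$ and $L=\mathcal{V}(x_1,x_3)$.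
   Context: Point scheme: for a quadratic algebra $A=\mathbb{K}\langle x_1,\dots,x_4\rangle/\langle g_1,\dots,g_6\rangle$ with each $g_i=\sum_{j,k}c_{ijk}x_jx_k$ homogeneous of degree 2, let $D$ be the $6\times 4$ matrix with entries $D_{ik}=\sum_j c_{ijk}x_j$ (linear forms in $x_1,\dots,x_4$), so that $g_i(\alpha,\beta):=\sum_{j,k}c_{ijk}\alpha_j\beta_k=(D(\alpha)\beta)_i$ for $(\alpha,\beta)\in\mathbb{P}^3\times\mathbb{P}^3$. The point scheme of $A$ is the subscheme of $\mathbb{P}^3$ (homogeneous coordinates $x_1,\dots,x_4$) defined by the vanishing of all $4\times 4$ minors of $D$; its points are the $\alpha\in\mathbb{P}^3$ for which there exists $\beta\in\mathbb{P}^3$ with $g_i(\alpha,\beta)=0$ for all $i$. For homogeneous polynomials $f_1,\dots,f_r$, $\mathcal{V}(f_1,\dots,f_r)$ denotes their zero locus (subscheme) in $\mathbb{P}^3$. *)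

(* Defs.v *)
From HB Require Import structures.
From mathcomp Require Import all_boot all_order all_algebra.
From mathcomp Require Import mpoly.
Set Implicit Arguments.
Unset Strict Implicit.
Unset Printing Implicit Defensive.
Import Order.TTheory GRing.Theory.
Local Open Scope ring_scope.

(* Polynomial ring K[x_1,..,x_4] = {mpoly K[4]}; variable x_(j+1) is 'X_j
   (indices are 0-based: x1 = 'X_0, x2 = 'X_1, x3 = 'X_2, x4 = 'X_3). *)

(* Coefficient tensor c_{ijk} of the quadratic relations g_i = sum c_{ijk} x_j x_k
   of the algebra A of the statement (0-based indices, g_(i+1) <-> i):
   g1 = x1x2 - x2x1, g2 = x2x3 - x3x2, g3 = x1x3 - x3x1, g4 = x1x4 - x4x1,
   g5 = x2x4 - x4x2 - q(x1^2 - x2x4) = (1+q) x2x4 - x4x2 - q x1x1,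
   g6 = x4x3 - x3x4. *)
Local Open Scope nat_scope.
Definition coefA (K : fieldType) (q : K) (i : 'I_6) (j k : 'I_4) : K :=
  match val i, val j, val k with
  | 0, 0, 1 => 1%R | 0, 1, 0 => (-1)%R
  | 1, 1, 2 => 1%R | 1, 2, 1 => (-1)%R
  | 2, 0, 2 => 1%R | 2, 2, 0 => (-1)%R
  | 3, 0, 3 => 1%R | 3, 3, 0 => (-1)%R
  | 4, 1, 3 => (1 + q)%R | 4, 3, 1 => (-1)%R | 4, 0, 0 => (- q)%R
  | 5, 3, 2 => 1%R | 5, 2, 3 => (-1)%R
  | _, _, _ => 0%R
  end.
Local Open Scope ring_scope.

Definition gform (K : fieldType) (m : nat) (c : 'I_m -> 'I_4 -> 'I_4 -> K)
  (i : 'I_m) (alpha beta : 'rV[K]_4) : K :=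
  \sum_(j < 4) \sum_(k < 4) c i j k * alpha 0 j * beta 0 k.

Definition Dmat (K : fieldType) (m : nat) (c : 'I_m -> 'I_4 -> 'I_4 -> K)
  : 'M[{mpoly K[4]}]_(m, 4) :=
  \matrix_(i < m, k < 4) \sum_(j < 4) c i j k *: 'X_j.

(* The family of all 4 x 4 minors of D, indexed by the choice of 4 rows
   (non-injective choices give the zero minor, which is harmless). *)
Definition minors4 (K : fieldType) (m : nat) (c : 'I_m -> 'I_4 -> 'I_4 -> K)
  (f : {ffun 'I_4 -> 'I_m}) : {mpoly K[4]} :=
  \det (rowsub f (Dmat c)).

Definition in_ideal (K : fieldType) (I : finType) (G : I -> {mpoly K[4]})
  (p : {mpoly K[4]}) : Prop :=
  exists a : {ffun I -> {mpoly K[4]}}, p = \sum_(i : I) a i * G i.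

(* p lies in the saturation (J : m^oo) of the ideal J generated by G with
   respect to the irrelevant ideal m = (x1,..,x4): some power m^n, which is
   generated by the monomials of total degree n, multiplies p into J. *)
Definition in_saturation (K : fieldType) (I : finType) (G : I -> {mpoly K[4]})
  (p : {mpoly K[4]}) : Prop :=
  exists n : nat, forall mon : 'X_{1..4}, mdeg mon = n -> in_ideal G ('X_[mon] * p).

(* Two homogeneous ideals (given by generators) define the same closed
   subscheme of P^3 iff their saturations coincide. *)
Definition same_subscheme (K : fieldType) (I1 I2 : finType)
  (G1 : I1 -> {mpoly K[4]}) (G2 : I2 -> {mpoly K[4]}) : Prop :=
  forall p, in_saturation G1 p <-> in_saturation G2 p.

(* Generators of the ideal of Q \cup L = V(x1^2 - x2x4) \cup V(x1, x3):
   the intersection (x1^2 - x2x4) \cap (x1, x3) = ((x1^2-x2x4) x1, (x1^2-x2x4) x3). *)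
Definition QuL_gens (K : fieldType) (b : bool) : {mpoly K[4]} :=
  ('X_0 ^+ 2 - 'X_1 * 'X_3) * (if b then 'X_0 else 'X_2).

(* Main.v *)
Require Import Defs.
From HB Require Import structures.
From mathcomp Require Import all_boot all_order all_algebra all_fingroup.
From mathcomp Require Import mpoly.
From mathcomp Require Import ring.
Import Order.TTheory GRing.Theory.
Local Open Scope ring_scope.



Definition det4f {R : comNzRingType} (a : nat -> nat -> R) : R :=
  a 0%N 0%N * a 1%N 1%N * a 2%N 2%N * a 3%N 3%N - a 0%N 0%N * a 1%N 1%N * a 2%N 3%N * a 3%N 2%N - a 0%N 0%N * a 1%N 2%N * a 2%N 1%N * a 3%N 3%N + a 0%N 0%N * a 1%N 2%N * a 2%N 3%N * a 3%N 1%N + a 0%N 0%N * a 1%N 3%N * a 2%N 1%N * a 3%N 2%N - a 0%N 0%N * a 1%N 3%N * a 2%N 2%N * a 3%N 1%N - a 0%N 1%N * a 1%N 0%N * a 2%N 2%N * a 3%N 3%N + a 0%N 1%N * a 1%N 0%N * a 2%N 3%N * a 3%N 2%N + a 0%N 1%N * a 1%N 2%N * a 2%N 0%N * a 3%N 3%N - a 0%N 1%N * a 1%N 2%N * a 2%N 3%N * a 3%N 0%N - a 0%N 1%N * a 1%N 3%N * a 2%N 0%N * a 3%N 2%N + a 0%N 1%N * a 1%N 3%N * a 2%N 2%N * a 3%N 0%N + a 0%N 2%N * a 1%N 0%N * a 2%N 1%N * a 3%N 3%N - a 0%N 2%N * a 1%N 0%N * a 2%N 3%N * a 3%N 1%N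 - a 0%N 2%N * a 1%N 1%N * a 2%N 0%N * a 3%N 3%N + a 0%N 2%N * a 1%N 1%N * a 2%N 3%N * a 3%N 0%N + a 0%N 2%N * a 1%N 3%N * a 2%N 0%N * a 3%N 1%N - a 0%N 2%N * a 1%N 3%N * a 2%N 1%N * a 3%N 0%N - a 0%N 3%N * a 1%N 0%N * a 2%N 1%N * a 3%N 2%N + a 0%N 3%N * a 1%N 0%N * a 2%N 2%N * a 3%N 1%N + a 0%N 3%N * a 1%N 1%N * a 2%N 0%N * a 3%N 2%N - a 0%N 3%N * a 1%N 1%N * a 2%N 2%N * a 3%N 0%N - a 0%N 3%N * a 1%N 2%N * a 2%N 0%N * a 3%N 1%N + a 0%N 3%N * a 1%N 2%N * a 2%N 1%N * a 3%N 0%N.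
Ltac compbump := repeat match goal with |- context [bump ?x ?y] =>
   let v := eval vm_compute in (bump x y) in change (bump x y) with v end.
Lemma det4 (R : comNzRingType) (a : nat -> nat -> R) :
  \det (\matrix_(i < 4, j < 4) a i j) = det4f a.
Proof.
rewrite (expand_det_row _ 0) !big_ord_recl big_ord0 /cofactor.
rewrite !(expand_det_row _ 0) !big_ord_recl !big_ord0 /cofactor.
rewrite !(expand_det_row _ 0) !big_ord_recl !big_ord0 /cofactor.
rewrite !det_mx11 !mxE /=. compbump. rewrite /det4f. ring.
Qed.





Definition Dn {K : fieldType} (q : K) (r k : nat) : {mpoly K[4]} :=
 match r, k with
 | 0%N, 0%N => - 'X_1 | 0%N, 1%N => 'X_0
 | 1%N, 1%N => - 'X_2 | 1%N, 2%N => 'X_1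
 | 2%N, 0%N => - 'X_2 | 2%N, 2%N => 'X_0
 | 3%N, 0%N => - 'X_3 | 3%N, 3%N => 'X_0
 | 4%N, 0%N => - (q%:MP * 'X_0) | 4%N, 1%N => - 'X_3 | 4%N, 3%N => (1 + q%:MP) * 'X_1
 | 5%N, 2%N => 'X_3 | 5%N, 3%N => - 'X_2
 | _,_ => 0 end.

Lemma Dmat_E (K : fieldType) (q : K) (i : 'I_6) (k : 'I_4) :
  Dmat (coefA q) i k = Dn q i k.
Proof.
rewrite mxE !big_ord_recl big_ord0 /=.
case: i => [[|[|[|[|[|[|i]]]]]] Hi] //; case: k => [[|[|[|[|k]]]] Hk] //=;
  compbump; rewrite /coefA /=;
  rewrite ?scale0r ?scale1r ?scaleN1r ?addr0 ?add0r ?scaleNr ?scalerDl ?mul_mpolyC //.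
all: try reflexivity.
all: by rewrite scale1r mulrDl mul1r mul_mpolyC.
Qed.



Lemma det_rowsubD {K : fieldType} (q : K) (h : 'I_4 -> 'I_6) :
  \det (rowsub h (Dmat (coefA q))) = det4f (fun i k => Dn q (h (inord i)) k).
Proof.
rewrite -det4; congr (\det _); apply/matrixP => i k; rewrite !mxE -Dmat_E inord_val.
by rewrite mxE.
Qed.

Lemma in_ideal0 {K : fieldType} {I : finType} {G : I -> {mpoly K[4]}} : in_ideal G 0.
Proof. by exists [ffun=> 0]; rewrite big1 // => i _; rewrite ffunE mul0r. Qed.
Lemma in_ideal_mul {K : fieldType} {I : finType} {G : I -> {mpoly K[4]}} r p : in_ideal G p -> in_ideal G (r * p).
Proof.
case=> a ->; exists [ffun i => r * a i]; rewrite mulr_sumr; apply: eq_bigr => i _.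
by rewrite ffunE mulrA.
Qed.
Lemma in_ideal_add {K : fieldType} {I : finType} {G : I -> {mpoly K[4]}} p p' : in_ideal G p -> in_ideal G p' -> in_ideal G (p + p').
Proof.
case=> a -> [b ->]; exists [ffun i => a i + b i]; rewrite -big_split /=.
by apply: eq_bigr => i _; rewrite ffunE mulrDl.
Qed.
Lemma in_ideal_gen {K : fieldType} {I : finType} {G : I -> {mpoly K[4]}} h : in_ideal G (G h).
Proof.
exists [ffun i => (i == h)%:R]; rewrite (bigD1 h) //= big1 ?ffunE ?eqxx ?mul1r ?addr0 //.
by move=> i /negbTE hi; rewrite ffunE hi mul0r.
Qed.
Lemma in_ideal_sum {K : fieldType} {I : finType} {G : I -> {mpoly K[4]}} (J : finType) (F : J -> {mpoly K[4]}) :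
  (forall j, in_ideal G (F j)) -> in_ideal G (\sum_j F j).
Proof.
move=> H; apply: (big_ind (in_ideal G)) => //; [exact: in_ideal0 | exact: in_ideal_add].
Qed.

Lemma in_ideal_trans {K : fieldType} {I J : finType} (G1 : I -> {mpoly K[4]})
  (G2 : J -> {mpoly K[4]}) p :
  (forall i, in_ideal G2 (G1 i)) -> in_ideal G1 p -> in_ideal G2 p.
Proof.
move=> H [a ->]; apply: in_ideal_sum => i; exact: in_ideal_mul.
Qed.

Lemma inJ {K : fieldType} (u v p : {mpoly K[4]}) :
  p = ('X_0 ^+ 2 - 'X_1 * 'X_3) * ('X_0 * u + 'X_2 * v) -> in_ideal (@QuL_gens K) p.
Proof.
move=> ->; rewrite (_ : _ * _ = u * QuL_gens K true + v * QuL_gens K false).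
  by apply: in_ideal_add; apply: in_ideal_mul; apply: in_ideal_gen.
rewrite /QuL_gens; ring.
Qed.

Lemma sorted_minor {K : fieldType} (q : K) r0 r1 r2 r3 :
  ((r0 < r1) && (r1 < r2) && (r2 < r3) && (r3 < 6))%N ->
  in_ideal (@QuL_gens K) (det4f (fun i k => Dn q (nth 0%N [:: r0; r1; r2; r3] i) k)).
Proof.
move=> H.
have [h3 h2 h1 h0] : [/\ r3 < 6, r2 < 6, r1 < 6 & r0 < 6]%N.
  move: H; rewrite -!andbA => /and4P[a b c d].
  have e : (r2 < 6)%N by exact: ltn_trans d.
  have f : (r1 < 6)%N by exact: ltn_trans e.
  by split => //; exact: ltn_trans f.
move: H.
case: r0 h0 => [|[|[|[|[|[|r0]]]]]] // _;
case: r1 h1 => [|[|[|[|[|[|r1]]]]]] // _;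
case: r2 h2 => [|[|[|[|[|[|r2]]]]]] // _;
case: r3 h3 => [|[|[|[|[|[|r3]]]]]] // _ _.
all: try (rewrite (_ : det4f _ = 0); [exact: in_ideal0 | rewrite /det4f /=; ring]).
- apply: (inJ (q%:MP * 'X_1) (0)); rewrite /det4f /=; ring.
- apply: (inJ (0) (q%:MP * 'X_1)); rewrite /det4f /=; ring.
- apply: (inJ (q%:MP * 'X_0) (0)); rewrite /det4f /=; ring.
- apply: (inJ (q%:MP * 'X_2) (0)); rewrite /det4f /=; ring.
- apply: (inJ (q%:MP * 'X_3) (0)); rewrite /det4f /=; ring.
- apply: (inJ (- (q%:MP * 'X_2)) (0)); rewrite /det4f /=; ring.
- apply: (inJ (0) (- (q%:MP * 'X_2))); rewrite /det4f /=; ring.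
- apply: (inJ (0) (- (q%:MP * 'X_3))); rewrite /det4f /=; ring.
Qed.



Lemma sort_perm (h : 'I_4 -> 'I_6) :
  exists p : 'S_4, forall i j : 'I_4, (i <= j)%N -> (h (p i) <= h (p j))%N.
Proof.
pose leT := fun a b : 'I_6 => (a <= b)%N.
pose t := [tuple h i | i < 4].
have st : sorted leT (sort leT t).
  by apply: sort_sorted => a b; exact: leq_total.
have pe : perm_eq (sort leT t) t by rewrite perm_sort perm_refl.
case/tuple_permP: pe => p Hp; exists p => i j le.
have E (k : 'I_4) : nth ord0 (sort leT t) k = h (p k).
  by rewrite Hp -tnth_nth !tnth_mktuple.
have tr : transitive leT by move=> a b c; exact: leq_trans.
have rf : reflexive leT by move=> a; exact: leqnn.
rewrite -!E; apply: (sorted_leq_nth tr rf) => //; by rewrite inE size_sort size_tuple.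
Qed.

Lemma det_rowsub_eq {K : fieldType} (q : K) {h : 'I_4 -> 'I_6} {i1 i2 : 'I_4} :
  i1 != i2 -> h i1 = h i2 -> \det (rowsub h (Dmat (coefA q))) = 0.
Proof.
move=> ne eh; apply: (determinant_alternate ne) => j; by rewrite !mxE eh.
Qed.

Lemma minor_in {K : fieldType} (q : K) (f : {ffun 'I_4 -> 'I_6}) :
  in_ideal (@QuL_gens K) (minors4 (coefA q) f).
Proof.
have [p Hp] := sort_perm f.
pose h := fun i => f (p i).
have -> : minors4 (coefA q) f = (-1) ^+ (p^-1)%g * \det (rowsub h (Dmat (coefA q))).
  rewrite /minors4 -det_perm -detM -mulmxE -row_permE; congr (\det _).
  by apply/matrixP => i k; rewrite !mxE /h permKV.
apply: in_ideal_mul.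
pose o0 : 'I_4 := inord 0; pose o1 : 'I_4 := inord 1;
pose o2 : 'I_4 := inord 2; pose o3 : 'I_4 := inord 3.
have l01 : (h o0 <= h o1)%N by apply: Hp; rewrite !inordK.
have l12 : (h o1 <= h o2)%N by apply: Hp; rewrite !inordK.
have l23 : (h o2 <= h o3)%N by apply: Hp; rewrite !inordK.
have n01 : o0 != o1 by rewrite -val_eqE /= !inordK.
have n12 : o1 != o2 by rewrite -val_eqE /= !inordK.
have n23 : o2 != o3 by rewrite -val_eqE /= !inordK.
case: (eqVneq (h o0) (h o1)) => [e|e01].
  by rewrite (det_rowsub_eq q n01 e); exact: in_ideal0.
case: (eqVneq (h o1) (h o2)) => [e|e12].
  by rewrite (det_rowsub_eq q n12 e); exact: in_ideal0.
case: (eqVneq (h o2) (h o3)) => [e|e23].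
  by rewrite (det_rowsub_eq q n23 e); exact: in_ideal0.
rewrite det_rowsubD.
have -> : det4f (fun i k => Dn q (h (inord i)) k) =
   det4f (fun i k => Dn q (nth 0%N [:: val (h o0); val (h o1); val (h o2); val (h o3)] i) k).
  by [].
apply: sorted_minor.
rewrite !ltn_neqAle l01 l12 l23 !val_eqE e01 e12 e23 /=.
by rewrite -ltn_neqAle ltn_ord.
Qed.



Lemma det_rowsubD' {K : fieldType} (q : K) (h : 'I_4 -> 'I_6) :
  \det (rowsub h (Dmat (coefA q))) =
  det4f (fun i k => Dn q (h (nth ord0 [:: @Ordinal 4 0 isT; @Ordinal 4 1 isT;
                                         @Ordinal 4 2 isT; @Ordinal 4 3 isT] i)) k).
Proof.
rewrite -det4; congr (\det _); apply/matrixP => i k; rewrite [LHS]mxE [RHS]mxE Dmat_E.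
by case: i => [[|[|[|[|i]]]] Hi] //=; congr (Dn q (nat_of_ord (h _)) _); apply: val_inj.
Qed.

Lemma minor_gen {K : fieldType} {q : K} {g : {ffun 'I_4 -> 'I_6}} {c : K} {p} :
  c * q != 0 -> minors4 (coefA q) g = (c * q)%:MP * p ->
  in_ideal (minors4 (coefA q)) p.
Proof.
move=> nz E.
have -> : p = ((c * q)^-1)%:MP * minors4 (coefA q) g.
  by rewrite E mulrA -mpolyCM mulVf // mul1r.
apply: in_ideal_mul; exact: in_ideal_gen.
Qed.

Lemma gen_in {K : fieldType} (q : K) (hq : q != 0) (j : 'I_4) (b : bool) :
  in_ideal (minors4 (coefA q)) ('X_j * QuL_gens K b).
Proof.
have n1 : 1 * q != 0 by rewrite mul1r.
have n2 : -1 * q != 0 by rewrite mulN1r oppr_eq0.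
case: j => [[|[|[|[|j]]]] Hj] //.
- have -> : Ordinal Hj = 0 by apply: val_inj.
  case: b.
  + apply: (minor_gen (g := [ffun i : 'I_4 => (inord (nth 0%N [:: 0; 2; 3; 4] i) : 'I_6)]) n1).
    rewrite /minors4 det_rowsubD' /det4f !ffunE /= !inordK //= /QuL_gens; ring.
  + apply: (minor_gen (g := [ffun i : 'I_4 => (inord (nth 0%N [:: 0; 2; 4; 5] i) : 'I_6)]) n1).
    rewrite /minors4 det_rowsubD' /det4f !ffunE /= !inordK //= /QuL_gens; ring.
- have -> : Ordinal Hj = 1 by apply: val_inj.
  case: b.
  + apply: (minor_gen (g := [ffun i : 'I_4 => (inord (nth 0%N [:: 0; 1; 3; 4] i) : 'I_6)]) n1).
    rewrite /minors4 det_rowsubD' /det4f !ffunE /= !inordK //= /QuL_gens; ring.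
  + apply: (minor_gen (g := [ffun i : 'I_4 => (inord (nth 0%N [:: 0; 1; 4; 5] i) : 'I_6)]) n1).
    rewrite /minors4 det_rowsubD' /det4f !ffunE /= !inordK //= /QuL_gens; ring.
- have -> : Ordinal Hj = 2 by apply: val_inj.
  case: b.
  + apply: (minor_gen (g := [ffun i : 'I_4 => (inord (nth 0%N [:: 0; 2; 4; 5] i) : 'I_6)]) n1).
    rewrite /minors4 det_rowsubD' /det4f !ffunE /= !inordK //= /QuL_gens; ring.
  + apply: (minor_gen (g := [ffun i : 'I_4 => (inord (nth 0%N [:: 1; 2; 4; 5] i) : 'I_6)]) n2).
    rewrite /minors4 det_rowsubD' /det4f !ffunE /= !inordK //= /QuL_gens; ring.
- have -> : Ordinal Hj = 3 by apply: val_inj.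
  case: b.
  + apply: (minor_gen (g := [ffun i : 'I_4 => (inord (nth 0%N [:: 0; 3; 4; 5] i) : 'I_6)]) n1).
    rewrite /minors4 det_rowsubD' /det4f !ffunE /= !inordK //= /QuL_gens; ring.
  + apply: (minor_gen (g := [ffun i : 'I_4 => (inord (nth 0%N [:: 1; 3; 4; 5] i) : 'I_6)]) n2).
    rewrite /minors4 det_rowsubD' /det4f !ffunE /= !inordK //= /QuL_gens; ring.
Qed.

Lemma in_ideal_mulgen {K : fieldType} {I J : finType} (G1 : I -> {mpoly K[4]})
  (G2 : J -> {mpoly K[4]}) x r :
  (forall i, in_ideal G2 (x * G1 i)) -> in_ideal G1 r -> in_ideal G2 (x * r).
Proof.
move=> H [a ->]; rewrite mulr_sumr; apply: in_ideal_sum => i.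
by rewrite mulrCA; apply: in_ideal_mul.
Qed.

Lemma scheme_part {K : fieldType} (q : K) (hq : q != 0) :
  same_subscheme (minors4 (coefA q)) (@QuL_gens K).
Proof.
move=> p; split.
  case=> n H; exists n => mon Hm; apply: in_ideal_trans (H mon Hm).
  exact: minor_in.
case=> n H; exists n.+1 => mon Hm.
have nz : mon != 0%MM by rewrite -mdeg_eq0 Hm.
have [j Hj] : exists j, mon j != 0%N.
  apply/existsP; apply: contraR nz => /existsPn Hn; apply/eqP/mnmP => j.
  by rewrite mnm0E; apply/eqP; rewrite -[_ == _]negbK Hn.
have le : (U_(j) <= mon)%MM by rewrite lep1mP.
have Hd : mdeg (mon - U_(j))%MM = n.
  by move: (mdegD (mon - U_(j)) U_(j)); rewrite submK // Hm mdeg1 addn1; case.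
rewrite -(submK le) mpolyXD [_ * 'X_j]mulrC -mulrA.
apply: in_ideal_mulgen (H _ Hd) => i; exact: gen_in.
Qed.



Definition gn {K : fieldType} (q : K) (i : nat) (a b : nat -> K) : K :=
 match i with
 | 0%N => a 0%N * b 1%N - a 1%N * b 0%N
 | 1%N => a 1%N * b 2%N - a 2%N * b 1%N
 | 2%N => a 0%N * b 2%N - a 2%N * b 0%N
 | 3%N => a 0%N * b 3%N - a 3%N * b 0%N
 | 4%N => (1 + q) * a 1%N * b 3%N - a 3%N * b 1%N - q * a 0%N * b 0%N
 | 5%N => a 3%N * b 2%N - a 2%N * b 3%N
 | _ => 0 end.

Lemma gformE {K : fieldType} (q : K) {alpha beta : 'rV[K]_4} {a b : nat -> K}
  (Ha : forall j : 'I_4, alpha 0 j = a j) (Hb : forall j : 'I_4, beta 0 j = b j)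
  {i : nat} (Hi : (i < 6)%N) : gform (coefA q) (Ordinal Hi) alpha beta = gn q i a b.
Proof.
rewrite /gform; under eq_bigr do under eq_bigr do rewrite Ha Hb.
case: i Hi => [|[|[|[|[|[|i]]]]]] Hi //;
  rewrite !big_ord_recl !big_ord0 /=; compbump; rewrite /coefA /=; ring.
Qed.



Lemma row4_eq0 {K : fieldType} {beta : 'rV[K]_4} {b : nat -> K}
  (Hb : forall j : 'I_4, beta 0 j = b j) :
  b 0%N = 0 -> b 1%N = 0 -> b 2%N = 0 -> b 3%N = 0 -> beta = 0.
Proof.
move=> h0 h1 h2 h3; apply/matrixP => i k; rewrite ord1 Hb mxE.
by case: k => [[|[|[|[|k]]]] Hk] //=.
Qed.

Lemma points_part {K : fieldType} (q : K) (hq : q != 0) (alpha : 'rV[K]_4) :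
  alpha != 0 ->
     ((exists2 beta : 'rV[K]_4, beta != 0 &
         forall i : 'I_6, gform (coefA q) i alpha beta = 0)
      <-> (alpha 0 0 ^+ 2 - alpha 0 1 * alpha 0 3 = 0
           \/ (alpha 0 0 = 0 /\ alpha 0 2 = 0))).
Proof.
move=> anz.
have [a Ha] : exists a : nat -> K, forall j : 'I_4, alpha 0 j = a j.
  by exists (fun j => alpha 0 (inord j)) => j; rewrite inord_val.
have E0 : alpha 0 0 = a 0%N by rewrite Ha.
have E1 : alpha 0 1 = a 1%N by rewrite Ha.
have E2 : alpha 0 2 = a 2%N by rewrite Ha.
have E3 : alpha 0 3 = a 3%N by rewrite Ha.
rewrite E0 E1 E2 E3.
have Fcase : a 0%N ^+ 2 - a 1%N * a 3%N = 0 -> exists2 beta : 'rV[K]_4, beta != 0 &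
         forall i : 'I_6, gform (coefA q) i alpha beta = 0.
  move=> F0; exists alpha => // -[i Hi]; rewrite (gformE q Ha Ha Hi).
  case: i Hi => [|[|[|[|[|[|i]]]]]] Hi //=; try ring.
  have -> : (1 + q) * a 1%N * a 3%N - a 3%N * a 1%N - q * a 0%N * a 0%N =
    - q * (a 0%N ^+ 2 - a 1%N * a 3%N) by ring.
  by rewrite F0 mulr0.
split.
  case=> beta bnz H.
  have [b Hb] : exists b : nat -> K, forall j : 'I_4, beta 0 j = b j.
    by exists (fun j => beta 0 (inord j)) => j; rewrite inord_val.
  have e i (Hi : (i < 6)%N) : gn q i a b = 0 by rewrite -(gformE q Ha Hb Hi) H.
  have e0 := e 0%N isT; have e1 := e 1%N isT; have e2 := e 2%N isT.
  have e3 := e 3%N isT; have e4 := e 4%N isT; have e5 := e 5%N isT.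
  have cA0 : q * a 0%N ^+ 2 * (a 0%N ^+ 2 - a 1%N * a 3%N) * b 0%N = 0.
    have -> : q * a 0%N ^+ 2 * (a 0%N ^+ 2 - a 1%N * a 3%N) * b 0%N = ((-1) * (a 0%N) * (a 0%N) * (a 3%N)) * gn q 0%N a b + 0 * gn q 2%N a b + ((a 0%N) * (a 0%N) * (a 1%N) + (a 0%N) * (a 0%N) * (a 1%N) * (q)) * gn q 3%N a b + ((-1) * (a 0%N) * (a 0%N) * (a 0%N)) * gn q 4%N a b by rewrite /gn /=; ring.
    by rewrite e0 e2 e3 e4; ring.
  have cA1 : q * a 0%N ^+ 2 * (a 0%N ^+ 2 - a 1%N * a 3%N) * b 1%N = 0.
    have -> : q * a 0%N ^+ 2 * (a 0%N ^+ 2 - a 1%N * a 3%N) * b 1%N = ((-1) * (a 0%N) * (a 1%N) * (a 3%N) + (-1) * (a 0%N) * (a 1%N) * (a 3%N) * (q) + (a 0%N) * (a 0%N) * (a 0%N) * (q)) * gn q 0%N a b + 0 * gn q 2%N a b + ((a 0%N) * (a 1%N) * (a 1%N) + (a 0%N) * (a 1%N) * (a 1%N) * (q)) * gn q 3%N a b + ((-1) * (a 0%N) * (a 0%N) * (a 1%N)) * gn q 4%N a b by rewrite /gn /=; ring.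
    by rewrite e0 e2 e3 e4; ring.
  have cA2 : q * a 0%N ^+ 2 * (a 0%N ^+ 2 - a 1%N * a 3%N) * b 2%N = 0.
    have -> : q * a 0%N ^+ 2 * (a 0%N ^+ 2 - a 1%N * a 3%N) * b 2%N = ((-1) * (a 0%N) * (a 2%N) * (a 3%N)) * gn q 0%N a b + ((-1) * (a 0%N) * (a 1%N) * (a 3%N) * (q) + (a 0%N) * (a 0%N) * (a 0%N) * (q)) * gn q 2%N a b + ((a 0%N) * (a 1%N) * (a 2%N) + (a 0%N) * (a 1%N) * (a 2%N) * (q)) * gn q 3%N a b + ((-1) * (a 0%N) * (a 0%N) * (a 2%N)) * gn q 4%N a b by rewrite /gn /=; ring.
    by rewrite e0 e2 e3 e4; ring.
  have cA3 : q * a 0%N ^+ 2 * (a 0%N ^+ 2 - a 1%N * a 3%N) * b 3%N = 0.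
    have -> : q * a 0%N ^+ 2 * (a 0%N ^+ 2 - a 1%N * a 3%N) * b 3%N = ((-1) * (a 0%N) * (a 3%N) * (a 3%N)) * gn q 0%N a b + 0 * gn q 2%N a b + ((a 0%N) * (a 1%N) * (a 3%N) + (a 0%N) * (a 0%N) * (a 0%N) * (q)) * gn q 3%N a b + ((-1) * (a 0%N) * (a 0%N) * (a 3%N)) * gn q 4%N a b by rewrite /gn /=; ring.
    by rewrite e0 e2 e3 e4; ring.
  have cB0 : - (q * a 2%N ^+ 2) * (a 0%N ^+ 2 - a 1%N * a 3%N) * b 0%N = 0.
    have -> : - (q * a 2%N ^+ 2) * (a 0%N ^+ 2 - a 1%N * a 3%N) * b 0%N = ((-1) * (a 0%N) * (a 2%N) * (a 3%N)) * gn q 1%N a b + ((-1) * (a 1%N) * (a 2%N) * (a 3%N) * (q)) * gn q 2%N a b + ((a 0%N) * (a 2%N) * (a 2%N)) * gn q 4%N a b + ((a 0%N) * (a 1%N) * (a 2%N) + (a 0%N) * (a 1%N) * (a 2%N) * (q)) * gn q 5%N a b by rewrite /gn /=; ring.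
    by rewrite e1 e2 e4 e5; ring.
  have cB1 : - (q * a 2%N ^+ 2) * (a 0%N ^+ 2 - a 1%N * a 3%N) * b 1%N = 0.
    have -> : - (q * a 2%N ^+ 2) * (a 0%N ^+ 2 - a 1%N * a 3%N) * b 1%N = ((-1) * (a 1%N) * (a 2%N) * (a 3%N) + (-1) * (a 1%N) * (a 2%N) * (a 3%N) * (q) + (a 0%N) * (a 0%N) * (a 2%N) * (q)) * gn q 1%N a b + ((-1) * (a 0%N) * (a 1%N) * (a 2%N) * (q)) * gn q 2%N a b + ((a 1%N) * (a 2%N) * (a 2%N)) * gn q 4%N a b + ((a 1%N) * (a 1%N) * (a 2%N) + (a 1%N) * (a 1%N) * (a 2%N) * (q)) * gn q 5%N a b by rewrite /gn /=; ring.
    by rewrite e1 e2 e4 e5; ring.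
  have cB2 : - (q * a 2%N ^+ 2) * (a 0%N ^+ 2 - a 1%N * a 3%N) * b 2%N = 0.
    have -> : - (q * a 2%N ^+ 2) * (a 0%N ^+ 2 - a 1%N * a 3%N) * b 2%N = ((-1) * (a 2%N) * (a 2%N) * (a 3%N)) * gn q 1%N a b + ((-1) * (a 0%N) * (a 2%N) * (a 2%N) * (q)) * gn q 2%N a b + ((a 2%N) * (a 2%N) * (a 2%N)) * gn q 4%N a b + ((a 1%N) * (a 2%N) * (a 2%N) + (a 1%N) * (a 2%N) * (a 2%N) * (q)) * gn q 5%N a b by rewrite /gn /=; ring.
    by rewrite e1 e2 e4 e5; ring.
  have cB3 : - (q * a 2%N ^+ 2) * (a 0%N ^+ 2 - a 1%N * a 3%N) * b 3%N = 0.
    have -> : - (q * a 2%N ^+ 2) * (a 0%N ^+ 2 - a 1%N * a 3%N) * b 3%N = ((-1) * (a 2%N) * (a 3%N) * (a 3%N)) * gn q 1%N a b + ((-1) * (a 0%N) * (a 2%N) * (a 3%N) * (q)) * gn q 2%N a b + ((a 2%N) * (a 2%N) * (a 3%N)) * gn q 4%N a b + ((a 1%N) * (a 2%N) * (a 3%N) + (a 0%N) * (a 0%N) * (a 2%N) * (q)) * gn q 5%N a b by rewrite /gn /=; ring.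
    by rewrite e1 e2 e4 e5; ring.
  case: (eqVneq (a 0%N ^+ 2 - a 1%N * a 3%N) 0) => [F0|Fnz]; [by left | right].
  have bne : ~ (b 0%N = 0 /\ b 1%N = 0 /\ b 2%N = 0 /\ b 3%N = 0).
    by case=> h0 [h1 [h2 h3]]; move/eqP: bnz; apply; exact: (row4_eq0 Hb h0 h1 h2 h3).
  split.
    case: (eqVneq (a 0%N) 0) => // a0nz; exfalso; apply: bne.
    have dF : q * a 0%N ^+ 2 * (a 0%N ^+ 2 - a 1%N * a 3%N) != 0.
      by rewrite !mulf_neq0 // expf_neq0.
    have z x : q * a 0%N ^+ 2 * (a 0%N ^+ 2 - a 1%N * a 3%N) * x = 0 -> x = 0.
      by move/eqP; rewrite mulf_eq0 (negbTE dF) /= => /eqP.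
    by split; [exact: (z _ cA0) | split; [exact: (z _ cA1) | split; [exact: (z _ cA2) | exact: (z _ cA3)]]].
  case: (eqVneq (a 2%N) 0) => // a2nz; exfalso; apply: bne.
  have dF : - (q * a 2%N ^+ 2) * (a 0%N ^+ 2 - a 1%N * a 3%N) != 0.
    by rewrite !mulf_neq0 // ?oppr_eq0 ?mulf_neq0 // expf_neq0.
  have z x : - (q * a 2%N ^+ 2) * (a 0%N ^+ 2 - a 1%N * a 3%N) * x = 0 -> x = 0.
    by move/eqP; rewrite mulf_eq0 (negbTE dF) /= => /eqP.
  by split; [exact: (z _ cB0) | split; [exact: (z _ cB1) | split; [exact: (z _ cB2) | exact: (z _ cB3)]]].
case=> [F0|[a0 a2]]; first exact: Fcase.
case: (eqVneq (a 3%N) 0) => [a3|a3nz].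
  by apply: Fcase; rewrite a0 a3; ring.
pose b := fun k : nat => [:: 0; (1 + q) * a 1%N; 0; a 3%N]`_k.
exists (\row_(k < 4) b k).
  apply/eqP => /matrixP /(_ 0 (@Ordinal 4 3 isT)); rewrite !mxE /=.
  by move/eqP: a3nz.
have Hb : forall j : 'I_4, (\row_(k < 4) b k) 0 j = b j by move=> j; rewrite mxE.
move=> [i Hi]; rewrite (gformE q Ha Hb Hi).
case: i Hi => [|[|[|[|[|[|i]]]]]] Hi //=; rewrite /b /= ?a0 ?a2; ring.
Qed.

Theorem proposition3 (K : closedFieldType) (q : K)
  (hchar : 2%N \notin [pchar K]) (hq0 : q != 0) (hq1 : q != -1) :
  (* scheme-theoretic: the point scheme V(4x4 minors of D) equals Q \cup L *)
  same_subscheme (minors4 (coefA q)) (@QuL_gens K)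
  /\
  (* on points: alpha in P^3 is in the point scheme iff alpha in Q \cup L *)
  (forall alpha : 'rV[K]_4, alpha != 0 ->
     ((exists2 beta : 'rV[K]_4, beta != 0 &
         forall i : 'I_6, gform (coefA q) i alpha beta = 0)
      <-> (alpha 0 0 ^+ 2 - alpha 0 1 * alpha 0 3 = 0
           \/ (alpha 0 0 = 0 /\ alpha 0 2 = 0)))).
Proof.
split; first exact: scheme_part.
move=> alpha; exact: points_part.
Qed.
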